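(* Let $P$ be a finite $(3+1)$-free poset, decomposed into clone sets $C_1,\dots,C_r$ and tangles $T_1,\dots,T_s$. Then there exists a listing $(X_1,\dots,X_{r+s})$ of the clone sets and tangles of $P$ such that for any two vertices $a\in X_i$ and $b\in X_j$ with $i\neq j$, we have $a<b$ exactly when (i) $\ell(a)\le\ell(b)-2$, or (ii) $\ell(a)=\ell(b)-1$ and $i<j$.
   Context: A poset $P$ is $(3+1)$-free if there are no $a,b,c,d\in P$ with $a<b<c$ and $d$ incomparable to each of $a,b,c$. For $a\in P$ let $D_a=\{x\in P:x<a\}$, $U_a=\{x\in P:x>a\}$. Write $a\mathrel{\top}b$ if neither of $D_a,D_b$ contains the other, $a\mathrel{\bot}b$ if neither of $U_a,U_b$ contains the other, and $a\approx b$ if $D_a=D_b$ and $U_a=U_b$. A top of a tangle is a subset $A\subseteq P$ with $|A|\ge2$ that is a connected component of the graph on $P$ with edges $\{a,b\}$ for $a\mathrel{\top}b$; a bottom of a tangle is defined in the same way using $\bot$. A top $A$ and bottom $B$ are matched if there are distinct $a_1,a_2\in A$, $b_1,b_2\in B$ with $b_1<a_1$, $b_2<a_2$ and the pairs $\{a_1,a_2\},\{b_1,b_2\},\{b_1,a_2\},\{b_2,a_1\}$ incomparable; in a $(3+1)$-free poset this is a perfect matching between tops and bottoms of tangles. A tangle is a matched pair $(A,B)$, identified with the set $A\cup B$. A clone set is an equivalence class of $\approx$ restricted to the vertices lying in no tangle. Levels: $L_1$ is the set of minimal elements of $P$, and $L_{k+1}$ is the set of minimal elements of $P\setminus(L_1\cup\dots\cup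 L_k)$; $\ell(a)$ denotes the index $k$ with $a\in L_k$. *)

(* Defs.v *)
From mathcomp Require Import all_boot all_order.
Set Implicit Arguments. Unset Strict Implicit. Unset Printing Implicit Defensive.
Import Order.Theory.
Local Open Scope order_scope.

Section PosetDefs.
Context {disp : Order.disp_t} {T : finPOrderType disp}.

Definition free31 : bool :=
  ~~ [exists a : T, exists b : T, exists c : T, exists d : T,
        [&& a < b, b < c, d >< a, d >< b & d >< c]].

Definition Dset (a : T) : {set T} := [set x | x < a].
Definition Uset (a : T) : {set T} := [set x | a < x].

Definition topr : rel T := fun a b =>
  ~~ (Dset a \subset Dset b) && ~~ (Dset b \subset Dset a).
Definition botr : rel T := fun a b =>
  ~~ (Uset a \subset Uset b) && ~~ (Uset b \subset Uset a).
Definition approx (a b : T) : bool := (Dset a == Dset b) && (Uset a == Uset b).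

Definition is_component (e : rel T) (A : {set T}) : bool :=
  [exists x in A, A == [set y | connect e x y]].

Definition is_top (A : {set T}) : bool := (1 < #|A|)%N && is_component topr A.
Definition is_bot (B : {set T}) : bool := (1 < #|B|)%N && is_component botr B.

Definition matched (A B : {set T}) : bool :=
  [exists a1 in A, exists a2 in A, exists b1 in B, exists b2 in B,
     [&& a1 != a2, b1 != b2, b1 < a1, b2 < a2,
         a1 >< a2, b1 >< b2, b1 >< a2 & b2 >< a1]].

Definition is_tangle (X : {set T}) : bool :=
  [exists A : {set T}, exists B : {set T},
     [&& is_top A, is_bot B, matched A B & X == A :|: B]].

Definition in_tangle (x : T) : bool := [exists X : {set T}, is_tangle X && (x \in X)].

Definition is_clone (C : {set T}) : bool :=
  [exists x, ~~ in_tangle x && (C == [set y | ~~ in_tangle y & approx x y])].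

Definition minset (S : {set T}) : {set T} := [set x in S | [forall y in S, ~~ (y < x)]].

Fixpoint upto (k : nat) : {set T} :=
  match k with
  | 0 => set0
  | k'.+1 => upto k' :|: minset (~: upto k')
  end.

(* L k = L_k  (L 0 is empty; L_(k+1) = minimal elements of P \ (L_1 ∪ ... ∪ L_k)) *)
Definition L (k : nat) : {set T} :=
  match k with 0 => set0 | k'.+1 => minset (~: upto k') end.

(* ℓ(a): the index k with a ∈ L_k (every element lies in some L_k, k <= #|T|) *)
Definition level (a : T) : nat := find (fun k => a \in L k) (iota 0 #|T|.+2).

End PosetDefs.

(* Main.v *)
Require Import Defs.
From mathcomp Require Import all_boot all_order.
Set Implicit Arguments. Unset Strict Implicit. Unset Printing Implicit Defensive.
Import Order.Theory.
Local Open Scope order_scope.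

Section Levels.
Variables (disp : Order.disp_t) (T : finPOrderType disp).
Implicit Types x y z : T.

Lemma upto_sub k : upto (T:=T) k \subset upto k.+1.
Proof. by rewrite /= subsetUl. Qed.

Lemma upto_mono m n : (m <= n)%N -> upto (T:=T) m \subset upto n.
Proof.
elim: n => [|n IH]; first by rewrite leqn0 => /eqP ->.
rewrite leq_eqVlt => /orP[/eqP->|]; first exact: subxx.
rewrite ltnS => /IH H; exact: subset_trans H (upto_sub n).
Qed.

Lemma mem_upto k x : (x \in upto k.+1) = [forall y, (y < x) ==> (y \in upto k)].
Proof.
elim: k x => [|k IH] x.
  rewrite /= set0U inE setC0 inE /=.
  apply/forallP/forallP => H y; move: (H y); by rewrite !inE ?implybF.
rewrite [upto k.+2]/= inE.
case Hx: (x \in upto k.+1) => /=.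
  apply/esym/forallP => y; apply/implyP => Hy.
  move: Hx; rewrite IH => /forallP/(_ y); rewrite Hy /= => Hy'.
  exact: (subsetP (upto_sub k)).
rewrite inE inE Hx /=.
apply/forallP/forallP => H y; move: (H y); rewrite in_setC.
  by case: (y < x); case: (y \in _).
by case: (y < x); case: (y \in _).
Qed.

Lemma in_upto_card_aux n x : (#|Dset x| <= n)%N -> x \in upto (#|Dset x|).+1.
Proof.
elim: n x => [|n IH] x Hx.
  rewrite mem_upto; apply/forallP => y; apply/implyP => Hy.
  move: Hx; rewrite leqn0 cards_eq0 => /eqP Hx.
  by move: (in_set0 y); rewrite -Hx inE Hy.
rewrite mem_upto; apply/forallP => y; apply/implyP => Hy.
have Hsub : Dset y \proper Dset x.
  rewrite properEneq; apply/andP; split.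
    apply/eqP => E; have : y \in Dset x by rewrite inE.
    by rewrite -E inE ltxx.
  by apply/subsetP => z; rewrite !inE => Hz; exact: lt_trans Hz Hy.
have Hlt := proper_card Hsub.
apply: (subsetP (upto_mono _)); last first.
  by apply: IH; rewrite -ltnS; apply: leq_trans Hx.
exact: Hlt.
Qed.

Lemma in_upto_card x : x \in upto (#|Dset x|).+1.
Proof. exact: (@in_upto_card_aux #|Dset x|). Qed.

Lemma in_upto_all x : x \in upto #|T|.
Proof.
apply: (subsetP (upto_mono _)) (in_upto_card x).
have : Dset x \proper [set: T].
  rewrite properT; apply/eqP => E; have : x \in [set: T] by [].
  by rewrite -E inE ltxx.
by move/proper_card; rewrite cardsT.
Qed.

Lemma upto0 : upto (T:=T) 0 = set0. Proof. by []. Qed.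

Lemma L_upto k x : (x \in L k.+1) = (x \in upto k.+1) && (x \notin upto k).
Proof. by rewrite /= !inE; case: (x \in upto k) => //=; rewrite andbT. Qed.

Lemma ex_L x : exists k, (k < #|T|.+2)%N && (x \in L k).
Proof.
have H := in_upto_all x.
have : exists k, x \in upto k by exists #|T|.
case/ex_minnP => k Hk Hmin.
have Hkle : (k <= #|T|)%N by exact: Hmin.
case: k Hk Hmin Hkle => [|k] Hk Hmin Hkle; first by move: Hk; rewrite inE.
exists k.+1; rewrite ltnS (leq_trans Hkle) //= L_upto Hk /=.
by apply/negP => /Hmin; rewrite ltnn.
Qed.

Lemma L_disj m n x : x \in L m -> x \in L n -> m = n.
Proof.
wlog Hmn : m n / (m <= n)%N.
  move=> W Hm Hn; case: (leqP m n) => H; first exact: W Hm Hn.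
  by apply/esym; apply: W Hn Hm; exact: ltnW.
case: m Hmn => [|m]; first by rewrite inE.
case: n => [|n]; first by [].
move=> Hmn; rewrite !L_upto => /andP[H1 _] /andP[_ H2].
apply/eqP; rewrite eqn_leq Hmn /= leqNgt; apply/negP => Hnm.
by move: H2; rewrite (subsetP (upto_mono (m:=m.+1) (n:=n) Hnm) x H1).
Qed.

Lemma levelP x : x \in L (level x).
Proof.
rewrite /level.
have [k /andP[Hk Hx]] := ex_L x.
have Hh : has (fun k => x \in L k) (iota 0 #|T|.+2).
  by apply/hasP; exists k => //; rewrite mem_iota.
have := nth_find 0 Hh.
rewrite nth_iota; first by []. by move: Hh; rewrite has_find size_iota.
Qed.

Lemma levelE k x : (level x == k) = (x \in L k).
Proof.
apply/eqP/idP => [<-|H]; first exact: levelP.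
exact: L_disj (levelP x) H.
Qed.

Lemma level_gt0 x : (0 < level x)%N.
Proof. have := levelP x; case: (level x) => [|n] //=; by rewrite inE. Qed.

Lemma uptoE m x : (x \in upto m) = (level x <= m)%N.
Proof.
have Hx := levelP x.
case Hl: (level x) Hx => [|l] Hx; first by move: Hx; rewrite inE.
move: Hx; rewrite L_upto => /andP[H1 H2].
apply/idP/idP => H.
  rewrite leqNgt; apply/negP => Hlt.
  by move: H2; rewrite (subsetP (upto_mono (m:=m) (n:=l) _) _ H).
exact: (subsetP (upto_mono H)).
Qed.

Lemma level_lt x y : x < y -> (level x < level y)%N.
Proof.
move=> Hxy.
have := levelP y.
case Hl: (level y) => [|l]; first by rewrite inE.
rewrite L_upto mem_upto => /andP[/forallP/(_ x) H _].
by move: H; rewrite Hxy uptoE.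
Qed.

Lemma level_pred y k : level y = k.+2 -> exists2 z, z < y & level z = k.+1.
Proof.
move=> Hy.
have := levelP y; rewrite Hy L_upto => /andP[_].
rewrite mem_upto => /forallPn[z]; rewrite negb_imply uptoE -ltnNge => /andP[Hz Hk].
exists z => //; apply/eqP; rewrite eqn_leq Hk andbT -ltnS -Hy.
exact: level_lt.
Qed.

End Levels.

Fixpoint lexlt (s t : seq nat) : bool :=
  match s, t with
  | [::], [::] => false
  | [::], _ :: _ => true
  | _ :: _, [::] => false
  | a :: s', b :: t' => (a < b)%N || ((a == b) && lexlt s' t')
  end.

Lemma lexlt_irr s : lexlt s s = false.
Proof. by elim: s => //= a s ->; rewrite ltnn eqxx. Qed.

Lemma lexlt_trans s t u : lexlt s t -> lexlt t u -> lexlt s u.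
Proof.
elim: s t u => [|a s IH] [|b t] [|c u] //=.
case/orP => [H1|/andP[/eqP E1 H1]] /orP[H2|/andP[/eqP E2 H2]].
- by rewrite (ltn_trans H1 H2).
- by rewrite -E2 H1.
- by rewrite E1 H2.
- by rewrite E1 E2 eqxx (IH _ _ H1 H2) orbT.
Qed.

Lemma lexlt_asym s t : lexlt s t -> lexlt t s = false.
Proof. by move=> H; apply/negP => H'; move: (lexlt_trans H H'); rewrite lexlt_irr. Qed.

Lemma lexlt_total s t : s != t -> lexlt s t || lexlt t s.
Proof.
elim: s t => [|a s IH] [|b t] //=.
case: (ltngtP a b) => //= E; subst b => H.
apply: IH; apply: contra H => /eqP ->; by [].
Qed.

Lemma lexlt_cat s t u v : size s = size t -> lexlt s t -> lexlt (s ++ u) (t ++ v).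
Proof.
elim: s t => [|a s IH] [|b t] //= [E] /orP[->//|/andP[-> H]].
by rewrite (IH _ E H) orbT.
Qed.

Lemma lexlt_prefix s u : u != [::] -> lexlt s (s ++ u).
Proof.
elim: s => [|a s IH] /=; first by case: u.
by move=> H; rewrite eqxx IH ?orbT.
Qed.

Lemma lexlt_rcons s a b : lexlt (rcons s a) (rcons s b) = (a < b)%N.
Proof. elim: s => [|c s IH] /=; first by rewrite andbF orbF. by rewrite ltnn eqxx IH. Qed.

Lemma lexlt_rcons2 s t a b : size s = size t -> lexlt s t -> lexlt (rcons s a) (rcons t b).
Proof. by move=> E H; rewrite -!cats1; exact: lexlt_cat. Qed.

Section Free.
Variables (disp : Order.disp_t) (T : finPOrderType disp).
Hypothesis H31 : free31 (T := T).
Implicit Types x y z w : T.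

Lemma incompE x y : x != y -> ~~ (x < y) -> ~~ (y < x) -> x >< y.
Proof.
move=> Hne H1 H2.
by rewrite /Order.comparable !le_eqVlt (negbTE H1) (negbTE H2) (negbTE Hne) (eq_sym y x) (negbTE Hne).
Qed.

Lemma lt_neq x y : x < y -> x != y.
Proof. by move=> H; apply/eqP => E; move: H; rewrite E ltxx. Qed.

Lemma nlt_level (x y : T) : (level y <= level x)%N -> ~~ (x < y).
Proof. by move=> H; apply/negP => /level_lt; rewrite ltnNge H. Qed.

Lemma neq_level (x y : T) : level x != level y -> x != y.
Proof. by apply: contra => /eqP ->. Qed.

Lemma star (b d a c : T) : level b = level d -> a < b -> b < c -> ~~ (a < d) -> ~~ (d < c) -> False.
Proof.
move=> Hl Hab Hbc Had Hdc.
move/existsP: H31; apply; exists a; apply/existsP; exists b; apply/existsP; exists c.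
apply/existsP; exists d; rewrite Hab Hbc /=.
have Lab := level_lt Hab; have Lbc := level_lt Hbc.
apply/and3P; split.
- apply: incompE => //.
    by apply: neq_level; rewrite -Hl gtn_eqF.
  by apply: nlt_level; rewrite -Hl ltnW.
- apply: incompE.
  + by apply/eqP => E; move: Had; rewrite E Hab.
  + by apply: nlt_level; rewrite Hl.
  + by apply: nlt_level; rewrite Hl.
- apply: incompE => //.
    by apply: neq_level; rewrite -Hl ltn_eqF.
  by apply: nlt_level; rewrite -Hl ltnW.
Qed.

Lemma far (a b : T) : (level a + 2 <= level b)%N -> a < b.
Proof.
move=> H.
have [m Eb La] : exists2 m, level b = m.+3 & (level a <= m.+1)%N.
  have Ha := level_gt0 a.
  exists (level b - 3).
    by rewrite -addn3 subnK // (leq_trans _ H) // addn2.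
  rewrite -(leq_add2r 2) (leq_trans H) // !addn2 -addn3 subnK //.
  by rewrite (leq_trans _ H) // addn2.
have [z1 Hz1 Ez1] := level_pred Eb.
have [z2 Hz2 Ez2] := level_pred Ez1.
case: (boolP (a == z2)) => [/eqP->|Hne]; first exact: lt_trans Hz2 Hz1.
case: (boolP (a < z2)) => [H0|Hnz2]; first exact: lt_trans H0 (lt_trans Hz2 Hz1).
case: (boolP (a < z1)) => [H0|Hnz1]; first exact: lt_trans H0 Hz1.
case: (boolP (a < b)) => // Hnb.
exfalso; move/existsP: H31; apply; exists z2; apply/existsP; exists z1; apply/existsP; exists b.
apply/existsP; exists a; rewrite Hz2 Hz1 /=.
apply/and3P; split.
- apply: incompE => //.
  by apply: nlt_level; rewrite Ez2.
- apply: incompE => //.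
  + by apply: neq_level; rewrite Ez1 ltn_eqF.
  + by apply: nlt_level; rewrite Ez1 ltnW.
- apply: incompE => //.
  + by apply: neq_level; rewrite Eb ltn_eqF // ltnW.
  + by apply: nlt_level; rewrite Eb ltnW // ltnW.
Qed.

Definition K w y w' y' := [&& w < y, w' < y', ~~ (w < y') & ~~ (w' < y)].

Lemma K_sym w y w' y' : K w y w' y' = K w' y' w y.
Proof. rewrite /K; by case: (w < y); case: (w' < y'); case: (w < y'); case: (w' < y). Qed.

Lemma notsub_ex (A B : {set T}) : ~~ (A \subset B) -> exists2 x, x \in A & x \notin B.
Proof. by move/subsetPn. Qed.

Lemma topr_K y y' : topr y y' -> exists w, exists w', K w y w' y'.
Proof.
case/andP => /subsetPn[w Hw Hw'] /subsetPn[w' Hw2 Hw2'].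
exists w, w'; rewrite !inE in Hw Hw' Hw2 Hw2'; exact/and4P.
Qed.

Lemma botr_K w w' : botr w w' -> exists y, exists y', K w y w' y'.
Proof.
case/andP => /subsetPn[y Hy Hy'] /subsetPn[y' Hy2 Hy2'].
exists y, y'; rewrite !inE in Hy Hy' Hy2 Hy2'; exact/and4P.
Qed.

Lemma K_topr w y w' y' : K w y w' y' -> topr y y'.
Proof.
case/and4P => H1 H2 H3 H4; apply/andP; split; apply/subsetPn.
  by exists w; rewrite inE.
by exists w'; rewrite inE.
Qed.

Lemma K_botr w y w' y' : K w y w' y' -> botr w w'.
Proof.
case/and4P => H1 H2 H3 H4; apply/andP; split; apply/subsetPn.
  by exists y; rewrite inE.
by exists y'; rewrite inE.
Qed.

Lemma topr_sym : symmetric (topr (T:=T)).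
Proof. by move=> x y; rewrite /topr andbC. Qed.
Lemma botr_sym : symmetric (botr (T:=T)).
Proof. by move=> x y; rewrite /botr andbC. Qed.

Lemma topr_irr y : topr y y = false.
Proof. by rewrite /topr subxx. Qed.
Lemma botr_irr y : botr y y = false.
Proof. by rewrite /botr subxx. Qed.

Lemma K_level w y w' y' : K w y w' y' ->
  [/\ level y = level y', level w = level w' & level y = (level w).+1].
Proof.
move=> HK; case/and4P: (HK) => H1 H2 H3 H4.
have L1 := level_lt H1; have L2 := level_lt H2.
have E1 : level y = (level w).+1.
  apply/eqP; rewrite eqn_leq L1 andbT leqNgt; apply/negP => H.
  case: (leqP (level y) (level y')) => Hyy.
    by move: H3; rewrite far // addn2 (leq_trans H).
  have : (level w' + 2 <= level y)%N by rewrite addn2 (leq_trans _ Hyy).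
  by move/far; rewrite (negbTE H4).
have E2 : level y' = (level w').+1.
  apply/eqP; rewrite eqn_leq L2 andbT leqNgt; apply/negP => H.
  case: (leqP (level y') (level y)) => Hyy.
    by move: H4; rewrite far // addn2 (leq_trans H).
  have : (level w + 2 <= level y')%N by rewrite addn2 (leq_trans _ Hyy).
  by move/far; rewrite (negbTE H3).
have E3 : level y = level y'.
  apply/eqP; rewrite eqn_leq; apply/andP; split; rewrite leqNgt; apply/negP => H.
    by move: H4; rewrite far // addn2 -E2.
  by move: H3; rewrite far // addn2 -E1.
split => //.
by apply/eqP; rewrite -eqSS -E1 -E2 E3.
Qed.

Lemma topr_level y y' : topr y y' -> level y = level y'.
Proof. by case/topr_K => w [w' /K_level[]]. Qed.
Lemma botr_level w w' : botr w w' -> level w = level w'.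
Proof. by case/botr_K => y [y' /K_level[]]. Qed.

Lemma topr_U y y' : topr y y' -> Uset y = Uset y'.
Proof.
case/topr_K => w [w' HK]; have [Ly _ _] := K_level HK.
case/and4P: HK => H1 H2 H3 H4.
apply/eqP; rewrite eqEsubset; apply/andP; split; apply/subsetP => c; rewrite !inE => Hc;
  apply/negPn/negP => Hn.
  exact: (star Ly H1 Hc H3 Hn).
exact: (star (esym Ly) H2 Hc H4 Hn).
Qed.

Lemma botr_D w w' : botr w w' -> Dset w = Dset w'.
Proof.
case/botr_K => y [y' HK]; have [_ Lw _] := K_level HK.
case/and4P: HK => H1 H2 H3 H4.
apply/eqP; rewrite eqEsubset; apply/andP; split; apply/subsetP => a; rewrite !inE => Ha;
  apply/negPn/negP => Hn.
  exact: (star Lw Ha H1 Hn H4).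
exact: (star (esym Lw) Ha H2 Hn H3).
Qed.

Lemma topr_botr x y z : topr x y -> botr x z -> False.
Proof.
move=> Hxy Hxz.
have HU := topr_U Hxy; have HD := botr_D Hxz.
have Hyz : botr y z by rewrite /botr -HU.
have HD2 := botr_D Hyz.
by move: Hxy; rewrite /topr HD -HD2 subxx.
Qed.

Section Comp.
Variable e : rel T.
Hypothesis esym : symmetric e.

Lemma comp_eq (A : {set T}) x : is_component e A -> x \in A -> A = [set y | connect e x y].
Proof.
case/existsP => x0 /andP[Hx0 /eqP HA] Hx.
have Cs := sym_connect_sym esym.
move: Hx; rewrite HA inE => Hx.
apply/setP => y; rewrite !inE.
apply/idP/idP => H.
  by apply: connect_trans H; rewrite Cs.
exact: connect_trans Hx H.
Qed.

Lemma comp_closed (A : {set T}) x y : is_component e A -> x \in A -> e x y -> y \in A.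
Proof.
move=> HA Hx Hxy; rewrite (comp_eq HA Hx) inE; exact: connect1.
Qed.

Lemma comp_share (A B : {set T}) x : is_component e A -> is_component e B ->
  x \in A -> x \in B -> A = B.
Proof. by move=> HA HB Ha Hb; rewrite (comp_eq HA Ha) (comp_eq HB Hb). Qed.

Lemma comp_nbr (A : {set T}) x : is_component e A -> (1 < #|A|)%N -> x \in A ->
  exists y, e x y.
Proof.
move=> HA Hc Hx.
have [y Hy Hyx] : exists2 y, y \in A & y != x.
  case/card_gt1P: Hc => a [b] [Ha Hb Hab].
  case: (eqVneq a x) => [Eax|Hax]; last by exists a.
  by exists b => //; rewrite -Eax eq_sym.
move: Hy; rewrite (comp_eq HA Hx) inE => /connectP[p Hp Hl].
case: p Hp Hl => [|z p] /=; first by move=> _ E; move: Hyx; rewrite E eqxx.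
by case/andP => Hz _ _; exists z.
Qed.

Lemma comp_ind (A : {set T}) (P : T -> Prop) x : is_component e A -> x \in A -> P x ->
  (forall u v, u \in A -> P u -> e u v -> P v) -> forall y, y \in A -> P y.
Proof.
move=> HA Hx Px Hst y; rewrite (comp_eq HA Hx) inE => /connectP[p Hp ->].
elim: p x Hx Px Hp => [|z p IH] x Hx Px //= /andP[Hxz Hp].
apply: IH Hp; first exact (comp_closed HA Hx Hxz).
exact: Hst Hx Px Hxz.
Qed.

End Comp.

Lemma K_share_top (B : {set T}) w1 y w2 y' w3 w4 y'' : is_component botr B ->
  K w1 y w2 y' -> K w3 y w4 y'' -> w1 \in B -> w3 \in B.
Proof.
move=> HB HK1 HK2 Hw1.
case/and4P: (HK1) => a1 a2 a3 a4; case/and4P: (HK2) => b1 b2 b3 b4.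
case: (boolP (w1 < y'')) => h1.
  case: (boolP (w3 < y')) => h2.
    apply: (comp_closed botr_sym HB Hw1); apply: (@K_botr _ y'' _ y').
    by apply/and4P.
  have Hw2 : w2 \in B := comp_closed botr_sym HB Hw1 (K_botr HK1).
  apply: (comp_closed botr_sym HB Hw2); apply: (@K_botr _ y' _ y).
  by apply/and4P.
have Hw4 : w4 \in B.
  apply: (comp_closed botr_sym HB Hw1); apply: (@K_botr _ y _ y'').
  by apply/and4P.
apply: (comp_closed botr_sym HB Hw4); rewrite botr_sym; exact: K_botr HK2.
Qed.

Lemma K_share_bot (A : {set T}) w y1 w' y2 y3 w'' y4 : is_component topr A ->
  K w y1 w' y2 -> K w y3 w'' y4 -> y1 \in A -> y3 \in A.
Proof.
move=> HA HK1 HK2 Hy1.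
case/and4P: (HK1) => a1 a2 a3 a4; case/and4P: (HK2) => b1 b2 b3 b4.
case: (boolP (w'' < y1)) => h1.
  case: (boolP (w' < y3)) => h2.
    apply: (comp_closed topr_sym HA Hy1); apply: (@K_topr w'' _ w').
    by apply/and4P.
  have Hy2 : y2 \in A := comp_closed topr_sym HA Hy1 (K_topr HK1).
  apply: (comp_closed topr_sym HA Hy2); rewrite topr_sym; apply: (@K_topr w _ w').
  by apply/and4P.
have Hy4 : y4 \in A.
  apply: (comp_closed topr_sym HA Hy1); apply: (@K_topr w _ w'').
  by apply/and4P.
apply: (comp_closed topr_sym HA Hy4); rewrite topr_sym; exact: K_topr HK2.
Qed.

Definition goodB (B : {set T}) y := forall w w' y', K w y w' y' -> w \in B.
Definition goodA (A : {set T}) w := forall y y' w', K w y w' y' -> y \in A.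

Definition tg (A B : {set T}) := [&& is_top A, is_bot B & matched A B].

Lemma incomp_nlt (x y : T) : x >< y -> ~~ (x < y).
Proof.
rewrite /Order.comparable negb_or => /andP[H _]; apply: contra H; exact: ltW.
Qed.

Lemma matched_K (A B : {set T}) : matched A B -> exists a1 a2 b1 b2,
  [/\ a1 \in A, a2 \in A, b1 \in B, b2 \in B & K b1 a1 b2 a2].
Proof.
case/existsP => a1 /andP[Ha1 /existsP[a2 /andP[Ha2 /existsP[b1 /andP[Hb1
  /existsP[b2 /andP[Hb2 H]]]]]]].
case/and5P: H => _ _ H1 H2 /and4P[_ _ H3 H4].
exists a1, a2, b1, b2; split => //; apply/and4P; split => //; exact: incomp_nlt.
Qed.

Lemma tgP A B : tg A B -> [/\ is_component topr A, (1 < #|A|)%N, is_component botr B,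
  (1 < #|B|)%N & matched A B].
Proof. by case/and3P => /andP[H1 H2] /andP[H3 H4] H5. Qed.

Lemma goodB_step (B : {set T}) u v : is_component botr B -> goodB B u -> topr u v -> goodB B v.
Proof.
move=> HB Hu Huv w w' y' HK.
have [w0 [w0' HK0]] := topr_K Huv.
have Hw0 := Hu _ _ _ HK0.
have Hw0' : w0' \in B by exact (comp_closed botr_sym HB Hw0 (K_botr HK0)).
have HK0' : K w0' v w0 u by rewrite K_sym.
exact (K_share_top HB HK0' HK Hw0').
Qed.

Lemma goodA_step (A : {set T}) u v : is_component topr A -> goodA A u -> botr u v -> goodA A v.
Proof.
move=> HA Hu Huv y y' w' HK.
have [c [c' HK0]] := botr_K Huv.
have Hc := Hu _ _ _ HK0.
have Hc' : c' \in A by exact (comp_closed topr_sym HA Hc (K_topr HK0)).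
have HK0' : K v c' u c by rewrite K_sym.
exact (K_share_bot HA HK0' HK Hc').
Qed.

Lemma tg_goodB A B : tg A B -> forall y, y \in A -> goodB B y.
Proof.
case/tgP => HA _ HB _ /matched_K[a1 [a2 [b1 [b2 [Ha1 Ha2 Hb1 Hb2 HK]]]]].
apply: (comp_ind topr_sym HA Ha1).
  move=> w w' y' HK'; exact: K_share_top HB HK HK' Hb1.
move=> u v _ Hu Huv; exact: goodB_step HB Hu Huv.
Qed.

Lemma tg_goodA A B : tg A B -> forall w, w \in B -> goodA A w.
Proof.
case/tgP => HA _ HB _ /matched_K[a1 [a2 [b1 [b2 [Ha1 Ha2 Hb1 Hb2 HK]]]]].
apply: (comp_ind botr_sym HB Hb1).
  move=> y y' w' HK'; exact: K_share_bot HA HK HK' Ha1.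
move=> u v _ Hu Huv; exact: goodA_step HA Hu Huv.
Qed.

Lemma tg_uniqB A B1 B2 : tg A B1 -> tg A B2 -> B1 = B2.
Proof.
move=> H1 H2.
have G := tg_goodB H1.
case/tgP: (H1) => _ _ HB1 _ _; case/tgP: H2 => _ _ HB2 _ /matched_K[a1 [a2 [b1 [b2 [Ha1 Ha2 Hb1 Hb2 HK]]]]].
apply: comp_share HB1 HB2 (G _ Ha1 _ _ _ HK) Hb1; exact: botr_sym.
Qed.

Lemma tg_uniqA A1 A2 B : tg A1 B -> tg A2 B -> A1 = A2.
Proof.
move=> H1 H2.
have G := tg_goodA H1.
case/tgP: (H1) => HA1 _ _ _ _; case/tgP: H2 => HA2 _ _ _ /matched_K[a1 [a2 [b1 [b2 [Ha1 Ha2 Hb1 Hb2 HK]]]]].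
apply: comp_share HA1 HA2 (G _ Hb1 _ _ _ HK) Ha1; exact: topr_sym.
Qed.

Lemma tg_top_nbr A B y : tg A B -> y \in A -> exists w, exists w', exists y',
  [/\ K w y w' y', w \in B, w' \in B & y' \in A].
Proof.
move=> Htg Hy; case/tgP: (Htg) => HA HcA HB _ _.
have [y' Hyy'] := comp_nbr topr_sym HA HcA Hy.
have [w [w' HK]] := topr_K Hyy'.
have Hw := tg_goodB Htg Hy HK.
exists w, w', y'; split => //.
  exact (comp_closed botr_sym HB Hw (K_botr HK)).
exact (comp_closed topr_sym HA Hy Hyy').
Qed.

Lemma tg_bot_nbr A B w : tg A B -> w \in B -> exists y, exists y', exists w',
  [/\ K w y w' y', y \in A, y' \in A & w' \in B].
Proof.
move=> Htg Hw; case/tgP: (Htg) => HA _ HB HcB _.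
have [w' Hww'] := comp_nbr botr_sym HB HcB Hw.
have [y [y' HK]] := botr_K Hww'.
have Hy := tg_goodA Htg Hw HK.
exists y, y', w'; split => //.
  exact (comp_closed topr_sym HA Hy (K_topr HK)).
exact (comp_closed botr_sym HB Hw Hww').
Qed.

Lemma tg_topbot A1 B1 A2 B2 z : tg A1 B1 -> tg A2 B2 -> z \in A1 -> z \in B2 -> False.
Proof.
move=> H1 H2 Hz1 Hz2.
case/tgP: H1 => HA1 HcA1 _ _ _; case/tgP: H2 => _ _ HB2 HcB2 _.
have [y Hy] := comp_nbr topr_sym HA1 HcA1 Hz1.
have [w Hw] := comp_nbr botr_sym HB2 HcB2 Hz2.
exact: topr_botr Hy Hw.
Qed.

Lemma tg_disj A1 B1 A2 B2 z : tg A1 B1 -> tg A2 B2 -> z \in A1 :|: B1 -> z \in A2 :|: B2 ->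
  A1 = A2 /\ B1 = B2.
Proof.
move=> H1 H2; rewrite !inE => /orP[Hz1|Hz1] /orP[Hz2|Hz2].
- have E : A1 = A2.
    case/tgP: (H1) => HA1 _ _ _ _; case/tgP: (H2) => HA2 _ _ _ _.
    exact (comp_share topr_sym HA1 HA2 Hz1 Hz2).
  by subst A2; split => //; exact: tg_uniqB H1 H2.
- by case: (tg_topbot H1 H2 Hz1 Hz2).
- by case: (tg_topbot H2 H1 Hz2 Hz1).
- have E : B1 = B2.
    case/tgP: (H1) => _ _ HB1 _ _; case/tgP: (H2) => _ _ HB2 _ _.
    exact (comp_share botr_sym HB1 HB2 Hz1 Hz2).
  by subst B2; split => //; exact: tg_uniqA H1 H2.
Qed.

Lemma tg_level A B u v : tg A B -> u \in A -> v \in B -> level u = (level v).+1.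
Proof.
move=> Htg Hu Hv.
case/tgP: (Htg) => HA _ HB _ /matched_K[a1 [a2 [b1 [b2 [Ha1 Ha2 Hb1 Hb2 HK]]]]].
have [_ _ E] := K_level HK.
have Eu : level u = level a1.
  apply: (comp_ind topr_sym HA Ha1 (P := fun u => level u = level a1)) Hu => //.
  by move=> x y _ <- /topr_level ->.
have Ev : level v = level b1.
  apply: (comp_ind botr_sym HB Hb1 (P := fun u => level u = level b1)) Hv => //.
  by move=> x y _ <- /botr_level ->.
by rewrite Eu Ev.
Qed.

Lemma K_matched (A B : {set T}) a1 a2 b1 b2 : a1 \in A -> a2 \in A -> b1 \in B -> b2 \in B ->
  K b1 a1 b2 a2 -> matched A B.
Proof.
move=> Ha1 Ha2 Hb1 Hb2 HK.
have [La Lb Lab] := K_level HK.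
have Ht := K_topr HK; have Hb := K_botr HK.
case/and4P: HK => H1 H2 H3 H4.
apply/existsP; exists a1; rewrite Ha1 /=; apply/existsP; exists a2; rewrite Ha2 /=.
apply/existsP; exists b1; rewrite Hb1 /=; apply/existsP; exists b2; rewrite Hb2 /=.
have Na : a1 != a2 by apply/eqP => E; move: Ht; rewrite E topr_irr.
have Nb : b1 != b2 by apply/eqP => E; move: Hb; rewrite E botr_irr.
rewrite Na Nb H1 H2 /=.
apply/and4P; split.
- by apply: incompE => //; apply: nlt_level; rewrite La.
- by apply: incompE => //; apply: nlt_level; rewrite Lb.
- apply: incompE => //; last by apply: nlt_level; rewrite -La Lab.
  by apply: neq_level; rewrite -La Lab ltn_eqF.
- apply: incompE => //; last by apply: nlt_level; rewrite -Lb Lab.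
  by apply: neq_level; rewrite -Lb Lab ltn_eqF.
Qed.

Definition tgx x := [exists A, exists B, tg A B && (x \in A :|: B)].

Lemma in_tangleE x : in_tangle x = tgx x.
Proof.
apply/existsP/existsP => [[X /andP[/existsP[A /existsP[B H]] Hx]]|[A /existsP[B /andP[H Hx]]]].
  case/and4P: H => H1 H2 H3 /eqP E; exists A; apply/existsP; exists B.
  by rewrite /tg H1 H2 H3 -E.
exists (A :|: B); rewrite Hx andbT; apply/existsP; exists A; apply/existsP; exists B.
move: H; rewrite /tg => /and3P[H1 H2 H3]. by rewrite H1 H2 H3 eqxx.
Qed.

Definition sameP x y := [exists A, exists B, [&& tg A B, x \in A :|: B & y \in A :|: B]]
  || [&& ~~ tgx x, ~~ tgx y & approx x y].

Lemma approx_refl x : approx x x.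
Proof. by rewrite /approx !eqxx. Qed.
Lemma approx_sym x y : approx x y = approx y x.
Proof. by rewrite /approx eq_sym [Uset x == _]eq_sym. Qed.
Lemma approx_trans x y z : approx x y -> approx y z -> approx x z.
Proof. by rewrite /approx => /andP[/eqP-> /eqP->] /andP[/eqP-> /eqP->]; rewrite !eqxx. Qed.

Lemma sameP_refl x : sameP x x.
Proof.
rewrite /sameP; case: (boolP (tgx x)) => [/existsP[A /existsP[B /andP[H Hx]]]|Hx].
  by apply/orP; left; apply/existsP; exists A; apply/existsP; exists B; rewrite H Hx.
by rewrite approx_refl orbT.
Qed.

Lemma sameP_sym x y : sameP x y = sameP y x.
Proof.
rewrite /sameP approx_sym; congr (_ || _).
  apply/existsP/existsP => [[A /existsP[B /and3P[H1 H2 H3]]]|[A /existsP[B /and3P[H1 H2 H3]]]];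
  by exists A; apply/existsP; exists B; rewrite H1 H2 H3.
by case: (tgx x); case: (tgx y).
Qed.

Lemma sameP_tg x y : sameP x y -> tgx x ->
  exists A, exists B, [/\ tg A B, x \in A :|: B & y \in A :|: B].
Proof.
case/orP => [/existsP[A /existsP[B /and3P[H1 H2 H3]]]|/and3P[H _ _]] Hx.
  by exists A, B.
by rewrite Hx in H.
Qed.

Lemma sameP_trans x y z : sameP x y -> sameP y z -> sameP x z.
Proof.
move=> Hxy Hyz.
case: (boolP (tgx y)) => Hy.
  have [A1 [B1 [H1 Hx1 Hy1]]] : exists A, exists B, [/\ tg A B, y \in A :|: B & x \in A :|: B].
    by rewrite sameP_sym in Hxy; exact: sameP_tg Hxy Hy.
  have [A2 [B2 [H2 Hy2 Hz2]]] := sameP_tg Hyz Hy.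
  have [E1 E2] := tg_disj H1 H2 Hx1 Hy2; subst A2 B2.
  by apply/orP; left; apply/existsP; exists A1; apply/existsP; exists B1; rewrite H1 Hy1 Hz2.
move: Hxy Hyz; rewrite /sameP.
have NT : forall u : T, [exists A, exists B, [&& tg A B, u \in A :|: B & y \in A :|: B]] = false.
  move=> u; apply/negbTE/negP => /existsP[A /existsP[B /and3P[H _ Hu']]].
  by move: Hy; rewrite /tgx => /negP; apply; apply/existsP; exists A; apply/existsP; exists B; rewrite H Hu'.
have NT2 : forall u : T, [exists A, exists B, [&& tg A B, y \in A :|: B & u \in A :|: B]] = false.
  move=> u; apply/negbTE/negP => /existsP[A /existsP[B /and3P[H Hu' _]]].
  by move: Hy; rewrite /tgx => /negP; apply; apply/existsP; exists A; apply/existsP; exists B; rewrite H Hu'.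
rewrite NT NT2 /= => /and3P[Hx _ Hxy] /and3P[_ Hz Hyz].
by rewrite Hx Hz (approx_trans Hxy Hyz) orbT.
Qed.

Lemma level_D x y : Dset x = Dset y -> level x = level y.
Proof.
have Hm : forall u v : T, Dset u = Dset v -> (level u <= level v)%N.
  move=> u v E.
  have := level_gt0 v; case Ev: (level v) => [|n] // _.
  rewrite -uptoE mem_upto; apply/forallP => z; apply/implyP => Hz.
  have : z \in Dset v by rewrite -E inE.
  rewrite inE => Hzv; rewrite uptoE -ltnS -Ev; exact: level_lt Hzv.
by move=> E; apply/eqP; rewrite eqn_leq Hm // Hm.
Qed.

Lemma comp_ex (e : rel T) x : symmetric e -> is_component e [set y | connect e x y].
Proof.
move=> _; apply/existsP; exists x; rewrite inE connect0 /=; by [].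
Qed.

Lemma topr_tg x x' : topr x x' -> exists A, exists B, [/\ tg A B, x \in A & x' \in A].
Proof.
move=> Hxx'.
have [w [w' HK]] := topr_K Hxx'.
exists [set y | connect topr x y], [set y | connect botr w y].
have Hx : x \in [set y | connect topr x y] by rewrite inE connect0.
have Hx' : x' \in [set y | connect topr x y] by rewrite inE connect1.
split => //; apply/and3P; split.
- apply/andP; split; last exact: comp_ex topr_sym.
  apply/card_gt1P; exists x, x'; split => //; apply/eqP => E; move: Hxx'; by rewrite E topr_irr.
- apply/andP; split; last exact: comp_ex botr_sym.
  have Hb := K_botr HK.
  apply/card_gt1P; exists w, w'; rewrite !inE connect0 connect1 //; split => //.
  by apply/eqP => E; move: Hb; rewrite E botr_irr.
- apply: (K_matched Hx Hx' _ _ HK); rewrite inE ?connect0 //; apply: connect1; exact: K_botr HK.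
Qed.

Lemma botr_tg w w' : botr w w' -> exists A, exists B, [/\ tg A B, w \in B & w' \in B].
Proof.
move=> Hww'.
have [y [y' HK]] := botr_K Hww'.
exists [set z | connect topr y z], [set z | connect botr w z].
have Hw : w \in [set z | connect botr w z] by rewrite inE connect0.
have Hw' : w' \in [set z | connect botr w z] by rewrite inE connect1.
split => //; apply/and3P; split.
- apply/andP; split; last exact: comp_ex topr_sym.
  have Ht := K_topr HK.
  apply/card_gt1P; exists y, y'; rewrite !inE connect0 connect1 //; split => //.
  by apply/eqP => E; move: Ht; rewrite E topr_irr.
- apply/andP; split; last exact: comp_ex botr_sym.
  apply/card_gt1P; exists w, w'; split => //; apply/eqP => E; move: Hww'; by rewrite E botr_irr.
- apply: (K_matched _ _ Hw Hw' HK); rewrite inE ?connect0 //; apply: connect1; exact: K_topr HK.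
Qed.

Lemma tg_sameP A B x y : tg A B -> x \in A :|: B -> y \in A :|: B -> sameP x y.
Proof.
by move=> H Hx Hy; apply/orP; left; apply/existsP; exists A; apply/existsP; exists B; rewrite H Hx Hy.
Qed.

Lemma topr_sameP x x' : topr x x' -> sameP x x'.
Proof.
case/topr_tg => A [B [H Hx Hx']]; apply: (tg_sameP H); by rewrite inE ?Hx ?Hx'.
Qed.

Lemma botr_sameP x x' : botr x x' -> sameP x x'.
Proof.
case/botr_tg => A [B [H Hx Hx']]; apply: (tg_sameP H); by rewrite inE ?Hx ?Hx' orbT.
Qed.

Lemma approx_sameP_aux x y : approx x y -> tgx x -> sameP x y.
Proof.
case/andP => /eqP ED /eqP EU.
case/existsP => A /existsP[B /andP[H]]; rewrite inE => /orP[HxA|HxB].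
  case/tgP: (H) => HA HcA _ _ _.
  have [z Hz] := comp_nbr topr_sym HA HcA HxA.
  have Hz' : topr y z by rewrite /topr -ED.
  have HzA := comp_closed topr_sym HA HxA Hz.
  have HyA : y \in A by apply: (comp_closed topr_sym HA HzA); rewrite topr_sym.
  by apply: (tg_sameP H); rewrite inE ?HxA ?HyA.
case/tgP: (H) => _ _ HB HcB _.
have [z Hz] := comp_nbr botr_sym HB HcB HxB.
have Hz' : botr y z by rewrite /botr -EU.
have HzB := comp_closed botr_sym HB HxB Hz.
have HyB : y \in B by apply: (comp_closed botr_sym HB HzB); rewrite botr_sym.
by apply: (tg_sameP H); rewrite inE ?HxB ?HyB orbT.
Qed.

Lemma approx_sameP x y : approx x y -> sameP x y.
Proof.
move=> Hxy; case: (boolP (tgx x)) => Hx; first exact: approx_sameP_aux.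
case: (boolP (tgx y)) => Hy.
  by rewrite sameP_sym; apply: approx_sameP_aux => //; rewrite approx_sym.
by apply/orP; right; rewrite Hx Hy.
Qed.

Lemma sameP_same_level x y : sameP x y -> level x = level y ->
  approx x y \/ exists A, exists B, tg A B /\ ((x \in A /\ y \in A) \/ (x \in B /\ y \in B)).
Proof.
case/orP => [/existsP[A /existsP[B /and3P[H Hx Hy]]]|/and3P[_ _ H]] E; last by left.
right; exists A, B; split => //.
move: Hx Hy; rewrite !inE => /orP[Hx|Hx] /orP[Hy|Hy]; try by [left|right].
  by move: E; rewrite (tg_level H Hx Hy) => /eqP; rewrite eq_sym ltn_eqF.
by move: E; rewrite (tg_level H Hy Hx) => /eqP; rewrite ltn_eqF.
Qed.

Lemma tg_U A B u v : tg A B -> u \in A -> v \in A -> Uset u = Uset v.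
Proof.
move=> H Hu; case/tgP: H => HA _ _ _ _.
apply: (comp_ind topr_sym HA Hu (P := fun v => Uset u = Uset v)) => //.
by move=> a b _ -> /topr_U.
Qed.

Lemma tg_D A B u v : tg A B -> u \in B -> v \in B -> Dset u = Dset v.
Proof.
move=> H Hu; case/tgP: H => _ _ HB _ _.
apply: (comp_ind botr_sym HB Hu (P := fun v => Dset u = Dset v)) => //.
by move=> a b _ -> /botr_D.
Qed.

Lemma top_cmp A B u x' : tg A B -> u \in A -> x' \notin A ->
  (Dset x' \subset Dset u) = ~~ (Dset u \subset Dset x').
Proof.
move=> H Hu Hx'; case/tgP: H => HA HcA _ _ _.
have Nt : ~~ topr u x'.
  by apply/negP => Ht; move: Hx'; rewrite (comp_closed topr_sym HA Hu Ht).
move: Nt; rewrite /topr negb_and !negbK.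
case: (boolP (Dset u \subset Dset x')) => H1 /=; last by move=> ->.
case: (boolP (Dset x' \subset Dset u)) => //= H2 _.
have E : Dset u = Dset x' by apply/eqP; rewrite eqEsubset H1.
have [z Hz] := comp_nbr topr_sym HA HcA Hu.
have HzA := comp_closed topr_sym HA Hu Hz.
have Hz' : topr z x' by rewrite topr_sym /topr -E.
by move: Hx'; rewrite (comp_closed topr_sym HA HzA Hz').
Qed.

Lemma bot_cmp A B u x' : tg A B -> u \in B -> x' \notin B ->
  (Uset x' \subset Uset u) = ~~ (Uset u \subset Uset x').
Proof.
move=> H Hu Hx'; case/tgP: H => _ _ HB HcB _.
have Nt : ~~ botr u x'.
  by apply/negP => Ht; move: Hx'; rewrite (comp_closed botr_sym HB Hu Ht).
move: Nt; rewrite /botr negb_and !negbK.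
case: (boolP (Uset u \subset Uset x')) => H1 /=; last by move=> ->.
case: (boolP (Uset x' \subset Uset u)) => //= H2 _.
have E : Uset u = Uset x' by apply/eqP; rewrite eqEsubset H1.
have [z Hz] := comp_nbr botr_sym HB HcB Hu.
have HzB := comp_closed botr_sym HB Hu Hz.
have Hz' : botr z x' by rewrite botr_sym /botr -E.
by move: Hx'; rewrite (comp_closed botr_sym HB HzB Hz').
Qed.

Lemma top_side A B u v x' : tg A B -> u \in A -> v \in A -> x' \notin A ->
  (Dset u \subset Dset x') = (Dset v \subset Dset x').
Proof.
move=> H Hu Hv Hx'; have H' := H; case/tgP: H' => HA _ _ _ _.
apply: (comp_ind topr_sym HA Hu (P := fun v => (Dset u \subset Dset x') = (Dset v \subset Dset x'))) Hv => //.
move=> a b Ha -> Hab.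
have Hb := comp_closed topr_sym HA Ha Hab.
have Ca := top_cmp H Ha Hx'; have Cb := top_cmp H Hb Hx'.
move: Hab; rewrite /topr.
case: (boolP (Dset a \subset Dset x')) => Ha1; case: (boolP (Dset b \subset Dset x')) => Hb1 //.
  move: Cb; rewrite Hb1 /= => Cb.
  by rewrite (subset_trans Ha1 Cb).
move: Ca; rewrite Ha1 /= => Ca.
by rewrite (subset_trans Hb1 Ca) andbF.
Qed.

Lemma bot_side A B u v x' : tg A B -> u \in B -> v \in B -> x' \notin B ->
  (Uset u \subset Uset x') = (Uset v \subset Uset x').
Proof.
move=> H Hu Hv Hx'; have H' := H; case/tgP: H' => _ _ HB _ _.
apply: (comp_ind botr_sym HB Hu (P := fun v => (Uset u \subset Uset x') = (Uset v \subset Uset x'))) Hv => //.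
move=> a b Ha -> Hab.
have Hb := comp_closed botr_sym HB Ha Hab.
have Ca := bot_cmp H Ha Hx'; have Cb := bot_cmp H Hb Hx'.
move: Hab; rewrite /botr.
case: (boolP (Uset a \subset Uset x')) => Ha1; case: (boolP (Uset b \subset Uset x')) => Hb1 //.
  move: Cb; rewrite Hb1 /= => Cb.
  by rewrite (subset_trans Ha1 Cb).
move: Ca; rewrite Ha1 /= => Ca.
by rewrite (subset_trans Hb1 Ca) andbF.
Qed.

Definition bef x x' := ~~ (Dset x' \subset Dset x) || ~~ (Uset x \subset Uset x').

Lemma notin_tg A B x x' : tg A B -> x \in A :|: B -> ~~ sameP x' x -> x' \notin A :|: B.
Proof. by move=> H Hx; apply: contra => Hx'; apply: (tg_sameP H). Qed.

Lemma bef_compat x y x' : level x = level y -> sameP x y -> ~~ sameP x' x -> bef x' x = bef x' y.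
Proof.
move=> L Hs Hn.
case: (sameP_same_level Hs L) => [/andP[/eqP ED /eqP EU]|[A [B [H [[HxA HyA]|[HxB HyB]]]]]].
  by rewrite /bef ED EU.
  have Hx' : x' \notin A.
    apply/negP => Hx'A; move/negP: Hn; apply; apply: (tg_sameP H); by rewrite inE ?Hx'A ?HxA.
  by rewrite /bef (tg_U H HxA HyA) (top_side H HxA HyA Hx').
have Hx' : x' \notin B.
  apply/negP => Hx'B; move/negP: Hn; apply; apply: (tg_sameP H); by rewrite inE ?Hx'B ?HxB orbT.
rewrite /bef (tg_D H HxB HyB) (bot_cmp H HxB Hx') (bot_cmp H HyB Hx').
by rewrite (bot_side H HxB HyB Hx').
Qed.

Lemma bef_asym x x' : level x = level x' -> ~~ sameP x x' -> bef x x' -> bef x' x -> False.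
Proof.
move=> L Hn.
rewrite /bef => /orP[/subsetPn[w Hw1 Hw2]|/subsetPn[c Hc1 Hc2]]
  /orP[/subsetPn[w' Hw1' Hw2']|/subsetPn[c' Hc1' Hc2']].
- move/negP: Hn; apply; apply: topr_sameP; apply/andP; split; apply/subsetPn.
    by exists w'.
  by exists w.
- rewrite !inE in Hw1 Hw2 Hc1' Hc2'; exact: (star (esym L) Hw1 Hc1' Hw2 Hc2').
- rewrite !inE in Hw1' Hw2' Hc1 Hc2; exact: (star L Hw1' Hc1 Hw2' Hc2).
- move/negP: Hn; apply; apply: botr_sameP; apply/andP; split; apply/subsetPn.
    by exists c.
  by exists c'.
Qed.

Lemma bef_tot x x' : ~~ sameP x x' -> bef x x' || bef x' x.
Proof.
apply: contraR; rewrite negb_or /bef !negb_or !negbK => /andP[/andP[H1 H2] /andP[H3 H4]].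
by apply: approx_sameP; rewrite /approx !eqEsubset H1 H2 H3 H4.
Qed.

Lemma bef_trans x x' x'' : level x = level x' -> ~~ sameP x x' -> bef x x' -> bef x' x'' -> bef x x''.
Proof.
move=> L Hn H1 H2; case: (boolP (bef x x'')) => // Hb; exfalso.
move: Hb; rewrite /bef negb_or !negbK => /andP[HD HU].
move: H1 H2; rewrite /bef => /orP[/subsetPn[w Hw1 Hw2]|/subsetPn[c Hc1 Hc2]]
  /orP[/subsetPn[w' Hw1' Hw2']|/subsetPn[c' Hc1' Hc2']].
- have Hw'x : w' \in Dset x by exact: (subsetP HD).
  move/negP: Hn; apply; apply: topr_sameP; apply/andP; split; apply/subsetPn.
    by exists w'.
  by exists w.
- have Hcx : c' \notin Uset x by apply: contra Hc2'; exact: (subsetP HU).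
  rewrite !inE in Hw1 Hw2 Hc1' Hcx.
  exact: (star (esym L) Hw1 Hc1' Hw2 Hcx).
- have Hw'x : w' \in Dset x by exact: (subsetP HD).
  rewrite !inE in Hw'x Hc1 Hw2' Hc2.
  exact: (star L Hw'x Hc1 Hw2' Hc2).
- have Hcx : c' \notin Uset x by apply: contra Hc2'; exact: (subsetP HU).
  move/negP: Hn; apply; apply: botr_sameP; apply/andP; split; apply/subsetPn.
    by exists c.
  by exists c'.
Qed.

Definition rk x := #|[set x' | (level x' == level x) && bef x' x && ~~ sameP x' x]|.

Lemma rk_eq x y : level x = level y -> sameP x y -> rk x = rk y.
Proof.
move=> L Hxy; apply: eq_card => x'; rewrite !inE L.
case: (boolP (sameP x' x)) => Hs.
  by rewrite (sameP_trans Hs Hxy) !andbF.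
have Hs' : ~~ sameP x' y.
  by apply: contra Hs => H; apply: (sameP_trans H); rewrite sameP_sym.
rewrite Hs' !andbT; case: (boolP (level x' == level y)) => //= /eqP L'.
exact: bef_compat.
Qed.

Lemma rk_lt x y : level x = level y -> ~~ sameP x y -> bef x y -> (rk x < rk y)%N.
Proof.
move=> L Hn Hb; apply: proper_card; apply/properP; split.
  apply/subsetP => x''; rewrite !inE => /andP[/andP[/eqP L1 H1] H2].
  rewrite L1 L eqxx /=.
  have H3 : bef x'' y := bef_trans L1 H2 H1 Hb.
  rewrite H3 /=; apply/negP => Hs.
  have E : bef x x'' = bef x y.
    apply: bef_compat => //; first by rewrite L1.
    by rewrite sameP_sym.
  apply: (bef_asym L1 H2 H1).
  by rewrite E.
exists x; first by rewrite !inE L eqxx Hb Hn.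
by rewrite !inE sameP_refl !andbF.
Qed.

Lemma rk_sameP x y : level x = level y -> rk x = rk y -> sameP x y.
Proof.
move=> L E; apply/negPn/negP => Hn.
case/orP: (bef_tot Hn) => H.
  by move: (rk_lt L Hn H); rewrite E ltnn.
have Hn' : ~~ sameP y x by rewrite sameP_sym.
by move: (rk_lt (esym L) Hn' H); rewrite E ltnn.
Qed.

Lemma rk_ltE x y : level x = level y -> (rk x < rk y)%N -> bef x y && ~~ sameP x y.
Proof.
move=> L Hlt.
case: (boolP (sameP x y)) => Hs.
  by move: Hlt; rewrite (rk_eq L Hs) ltnn.
case/orP: (bef_tot Hs) => H; first by rewrite H.
have Hn' : ~~ sameP y x by rewrite sameP_sym.
by move: (rk_lt (esym L) Hn' H); rewrite ltnNge ltnW.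
Qed.

Lemma sameP_mem A B x y : tg A B -> x \in A :|: B -> sameP x y -> y \in A :|: B.
Proof.
move=> H Hx /orP[/existsP[A' /existsP[B' /and3P[H' Hx' Hy']]]|/and3P[Hn _ _]].
  by have [<- <-] := tg_disj H' H Hx' Hx.
by move: Hn; rewrite /tgx => /negP[]; apply/existsP; exists A; apply/existsP; exists B; rewrite H Hx.
Qed.

Lemma tg_levelB A B u v : tg A B -> u \in B -> v \in B -> level u = level v.
Proof. by move=> H Hu Hv; apply: level_D; exact: tg_D H Hu Hv. Qed.

Lemma tg_levelA A B u v : tg A B -> u \in A -> v \in A -> level u = level v.
Proof.
move=> H Hu Hv; case/tgP: (H) => _ _ HB HcB _.
have [b Hb] : exists b, b \in B.
  by case/card_gt1P: HcB => b [b' [Hb _ _]]; exists b.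
by rewrite (tg_level H Hu Hb) (tg_level H Hv Hb).
Qed.

Definition Dp y := [pred w | (w < y) && ((level w).+1 == level y)].
Definition par y := if [pick w | Dp y w] is Some w0 then arg_max w0 (Dp y) rk else y.

Lemma par_spec y : (1 < level y)%N -> [/\ par y < y, (level (par y)).+1 = level y &
  forall w, w < y -> (level w).+1 = level y -> (rk w <= rk (par y))%N].
Proof.
move=> Hy.
have [w Hw Lw] : exists2 w, w < y & (level w).+1 = level y.
  case Ey: (level y) Hy => [|[|k]] // _.
  have [z Hz Lz] := level_pred Ey; by exists z; rewrite ?Lz.
rewrite /par; case: pickP => [w0 Hw0|Hn]; last by move: (Hn w); rewrite /= Hw Lw eqxx.
case: (arg_maxnP rk Hw0) => p /andP[Hp /eqP Lp] Hmax.
split => // w' Hw' Lw'; apply: Hmax; by rewrite /= Hw' Lw' eqxx.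
Qed.

Lemma bot_uniform A B u v y : tg A B -> u \in B -> v \in B -> y \notin A -> u < y -> v < y.
Proof.
move=> H Hu Hv Hy Huy; have H' := H; case/tgP: H' => _ _ HB _ _.
apply: (comp_ind botr_sym HB Hu (P := fun v => v < y)) Hv => // a b Ha Hay Hab.
apply/negPn/negP => Hby.
have [c [c' HK]] := botr_K Hab.
case/and4P: (HK) => _ H2 H3 _.
have HK' : K a y b c' by apply/and4P.
by move: Hy; rewrite (tg_goodA H Ha HK').
Qed.

Lemma Q4 x y : (level x).+1 = level y -> ~~ sameP x y -> (x < y) = (rk x <= rk (par y))%N.
Proof.
move=> L Hn.
have Hy : (1 < level y)%N by rewrite -L ltnS level_gt0.
have [Hp Lp Hmax] := par_spec Hy.
apply/idP/idP => [Hxy|]; first exact: Hmax.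
have Lxp : level x = level (par y) by apply/eqP; rewrite -eqSS Lp L.
rewrite leq_eqVlt => /orP[/eqP E|Hlt].
  have Hs := rk_sameP Lxp E.
  case: (sameP_same_level Hs Lxp) => [/andP[_ /eqP EU]|[A [B [H [[HxA HpA]|[HxB HpB]]]]]].
    have : y \in Uset (par y) by rewrite inE.
    by rewrite -EU inE.
  - have : y \in Uset (par y) by rewrite inE.
    by rewrite -(tg_U H HxA HpA) inE.
  - have HyA : y \notin A.
      apply/negP => HyA; move/negP: Hn; apply; apply: (tg_sameP H); by rewrite inE ?HxB ?HyA ?orbT.
    exact: (bot_uniform H HpB HxB HyA Hp).
case/andP: (rk_ltE Lxp Hlt) => Hb Hs.
apply/negPn/negP => Hxy.
apply: (bef_asym Lxp Hs Hb); rewrite /bef; apply/orP; right.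
by apply/subsetPn; exists y; rewrite inE.
Qed.

Lemma Q5core A B w0 y w0' y2 w : tg A B -> K w0 y w0' y2 -> w0 \in B -> w0' \in B ->
  w < y -> level w = level w0 -> w \notin B -> (rk w < rk w0)%N.
Proof.
move=> H HK Hw0 Hw0' Hwy Lw HwB.
have H' := H; case/tgP: H' => _ _ HB _ _.
have Hns : ~~ sameP w w0.
  apply/negP => Hs; rewrite sameP_sym in Hs.
  have := sameP_mem H (_ : w0 \in A :|: B) Hs; rewrite inE Hw0 orbT => /(_ isT).
  rewrite inE (negbTE HwB) orbF => HwA.
  by move: Lw; rewrite (tg_level H HwA Hw0) => E; exact: (n_Sn _ (esym E)).
case/and4P: (HK) => K1 K2 K3 K4.
have Hwy2 : w < y2.
  apply/negPn/negP => Hn.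
  have HK' : K w y w0' y2 by apply/and4P.
  by move: HwB; rewrite (comp_closed botr_sym HB Hw0' (_ : botr w0' w)) // botr_sym (K_botr HK').
apply: (rk_lt Lw Hns).
case/orP: (bef_tot Hns) => // Hb; exfalso.
move: Hb; rewrite /bef => /orP[/subsetPn[v Hv1 Hv2]|/subsetPn[c Hc1 Hc2]].
  rewrite !inE in Hv1 Hv2.
  exact: (star Lw Hv1 Hwy2 Hv2 K3).
have Nb : ~~ botr w0 w.
  by apply/negP => Hb; move: HwB; rewrite (comp_closed botr_sym HB Hw0 Hb).
move: Nb; rewrite /botr negb_and !negbK => /orP[Hs|Hs].
  by move: Hc2; rewrite (subsetP Hs).
have : y2 \in Uset w by rewrite inE.
by move/(subsetP Hs); rewrite inE (negbTE K3).
Qed.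

Lemma Q5 A B y : tg A B -> y \in A -> par y \in B.
Proof.
move=> H Hy.
have [w0 [w0' [y2 [HK Hw0 Hw0' Hy2]]]] := tg_top_nbr H Hy.
have [_ _ Ly] := K_level HK.
have Hl : (1 < level y)%N by rewrite Ly ltnS level_gt0.
have [Hp Lp Hmax] := par_spec Hl.
have Hr := Hmax w0 (_ : w0 < y) (esym Ly).
apply/negPn/negP => HpB.
have Lpw : level (par y) = level w0 by apply/eqP; rewrite -eqSS Lp Ly.
have := Q5core H HK Hw0 Hw0' Hp Lpw HpB.
case/and4P: HK => K1 _ _ _.
by rewrite ltnNge Hr.
Qed.

Lemma Q6 A B a w : tg A B -> a \in A -> level w = level a -> ~~ sameP w a -> par w \in B ->
  (rk a < rk w)%N.
Proof.
move=> H Ha Lw Hn HpB.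
have H' := H; case/tgP: H' => HA _ HB _ _.
have La : level a = (level (par w)).+1 := tg_level H Ha HpB.
have Hl : (1 < level w)%N by rewrite Lw La ltnS level_gt0.
have [Hp Lp _] := par_spec Hl.
set b := par w in Hp Lp HpB La.
have [c [c' [b' [HK Hc Hc' Hb']]]] := tg_bot_nbr H HpB.
case/and4P: (HK) => K1 K2 K3 K4.
have HwA : w \notin A.
  apply/negP => HwA; move/negP: Hn; apply; apply: (tg_sameP H); by rewrite inE ?HwA ?Ha.
have Hb'w : b' < w.
  apply/negPn/negP => Hn'.
  have HK' : K b w b' c' by apply/and4P.
  by move: HwA; rewrite (tg_goodA H HpB HK').
have Lc' : level c' = level w by rewrite Lw (tg_levelA H Hc' Ha).
have Ea : rk a = rk c'.
  apply: rk_eq; first by rewrite Lc'.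
  by apply: (tg_sameP H); rewrite inE ?Ha ?Hc'.
rewrite Ea.
have Hns : ~~ sameP c' w.
  apply/negP => Hs.
  have := sameP_mem H (_ : c' \in A :|: B) Hs; rewrite inE Hc' => /(_ isT).
  rewrite inE (negbTE HwA) /= => HwB.
  by move: La; rewrite -Lw (tg_levelB H HwB HpB) => E; exact: (n_Sn _ E).
apply: (rk_lt Lc' Hns).
case/orP: (bef_tot Hns) => // Hb; exfalso.
move: Hb; rewrite /bef => /orP[/subsetPn[v Hv1 Hv2]|/subsetPn[z Hz1 Hz2]].
  have Nt : ~~ topr c' w.
    apply/negP => Ht; move: HwA; by rewrite (comp_closed topr_sym HA Hc' Ht).
  move: Nt; rewrite /topr negb_and !negbK => /orP[Hs|Hs].
    by move: Hv2; rewrite (subsetP Hs).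
  have : b \in Dset w by rewrite inE.
  by move/(subsetP Hs); rewrite inE (negbTE K3).
rewrite !inE in Hz1 Hz2.
exact: (star (esym Lc') Hp Hz1 K3 Hz2).
Qed.

Lemma Q2 x y : level x = level y -> (1 < level x)%N -> (rk x <= rk y)%N ->
  (rk (par x) <= rk (par y))%N.
Proof.
move=> L Hl.
have Hl' : (1 < level y)%N by rewrite -L.
have [Hpx Lpx Mx] := par_spec Hl; have [Hpy Lpy My] := par_spec Hl'.
rewrite leq_eqVlt => /orP[/eqP E|Hlt].
  have Hs := rk_sameP L E.
  have Dcase : Dset x = Dset y -> (rk (par x) <= rk (par y))%N.
    move=> ED; apply: My; last by rewrite Lpx L.
    have : par x \in Dset x by rewrite inE.
    by rewrite ED inE.
  case: (sameP_same_level Hs L) => [/andP[/eqP ED _]|[A [B [H [[HxA HyA]|[HxB HyB]]]]]].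
  - exact: Dcase.
  - have Px := Q5 H HxA; have Py := Q5 H HyA.
    by rewrite (rk_eq (tg_levelB H Px Py) (tg_sameP H (_ : par x \in A :|: B) _)) // inE ?Px ?Py orbT.
  - exact: Dcase (tg_D H HxB HyB).
case/andP: (rk_ltE L Hlt) => Hb Hs.
rewrite leqNgt; apply/negP => Hlt'.
case: (boolP (par x < y)) => Hp.
  by move: (My _ Hp (etrans Lpx L)); rewrite leqNgt Hlt'.
apply: (bef_asym L Hs Hb); rewrite /bef; apply/orP; left.
by apply/subsetPn; exists (par x); rewrite inE.
Qed.

Fixpoint vecn n x := match n with
  | 0 => [::]
  | n'.+1 => if (level x <= 1)%N then [:: rk x] else rcons (vecn n' (par x)) (rk x)
  end.
Definition vec x := vecn (level x) x.

Lemma vec1 x : level x = 1 -> vec x = [:: rk x].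
Proof. by move=> L; rewrite /vec L /= L leqnn. Qed.

Lemma vecS x : (1 < level x)%N -> vec x = rcons (vec (par x)) (rk x).
Proof.
move=> Hl; have [_ Lp _] := par_spec Hl.
rewrite /vec -Lp /=; by rewrite ltnNge in Hl; move: Hl; rewrite -Lp => /negbTE ->.
Qed.

Lemma size_vec_aux n x : level x = n -> size (vec x) = n.
Proof.
elim: n x => [|n IH] x L; first by move: (level_gt0 x); rewrite L.
case: n IH L => [|n] IH L; first by rewrite vec1.
have Hl : (1 < level x)%N by rewrite L.
have [_ Lp _] := par_spec Hl.
rewrite vecS // size_rcons (IH (par x)) //.
by apply/eqP; rewrite -eqSS Lp L.
Qed.

Lemma size_vec x : size (vec x) = level x.
Proof. exact: size_vec_aux. Qed.

Lemma vec_mono n x y : level x = n -> level y = n -> (rk x <= rk y)%N ->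
  ((rk x < rk y)%N -> lexlt (vec x) (vec y)) /\ (rk x = rk y -> vec x = vec y).
Proof.
elim: n x y => [|n IH] x y Lx Ly Hle; first by move: (level_gt0 x); rewrite Lx.
case: n IH Lx Ly => [|n] IH Lx Ly.
  rewrite !vec1 //; split => [H|->] //=; by rewrite H.
have Hlx : (1 < level x)%N by rewrite Lx.
have Hly : (1 < level y)%N by rewrite Ly.
have [_ Lpx _] := par_spec Hlx; have [_ Lpy _] := par_spec Hly.
have Lpx' : level (par x) = n.+1 by apply/eqP; rewrite -eqSS Lpx Lx.
have Lpy' : level (par y) = n.+1 by apply/eqP; rewrite -eqSS Lpy Ly.
have Hq := Q2 (etrans Lx (esym Ly)) Hlx Hle.
have [IH1 IH2] := IH _ _ Lpx' Lpy' Hq.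
rewrite (vecS Hlx) (vecS Hly); split => [Hlt|E].
  move: Hq; rewrite leq_eqVlt => /orP[/eqP E|H].
    by rewrite (IH2 E) lexlt_rcons.
  by apply: lexlt_rcons2; [rewrite !size_vec Lpx' Lpy' | exact: IH1].
have Hq' := Q2 (etrans Ly (esym Lx)) Hly (eq_leq (esym E)).
have Ep : rk (par x) = rk (par y) by apply/eqP; rewrite eqn_leq Hq Hq'.
by rewrite (IH2 Ep) E.
Qed.

Lemma vec_lt x y : level x = level y -> (rk x < rk y)%N -> lexlt (vec x) (vec y).
Proof. move=> L H; have [H1 _] := vec_mono erefl (esym L) (ltnW H); exact: H1. Qed.

Lemma vec_eq x y : level x = level y -> rk x = rk y -> vec x = vec y.
Proof. move=> L H; have [_ H2] := vec_mono erefl (esym L) (eq_leq H); exact: H2. Qed.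

Lemma vecG x z s : level x = level z -> s != [::] ->
  ((rk x <= rk z)%N -> lexlt (vec x) (vec z ++ s)) /\ ((rk z < rk x)%N -> lexlt (vec z ++ s) (vec x)).
Proof.
move=> L Hs; split.
  rewrite leq_eqVlt => /orP[/eqP E|H].
    by rewrite (vec_eq L E); exact: lexlt_prefix.
  rewrite -[vec x]cats0; apply: lexlt_cat; first by rewrite !size_vec.
  exact: vec_lt.
move=> H; rewrite -[vec x]cats0; apply: lexlt_cat; first by rewrite !size_vec.
exact: vec_lt.
Qed.

Definition intop x := [exists A, exists B, tg A B && (x \in A)].
Definition ekey x := if intop x then vec (par x) else vec x.

Lemma vecS2 x : (1 < level x)%N -> vec x = vec (par x) ++ [:: rk x].
Proof. by move=> H; rewrite vecS // cats1. Qed.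

Lemma top_down A B a w : tg A B -> a \in A -> level w = level a -> (rk w < rk a)%N ->
  (rk (par w) < rk (par a))%N.
Proof.
move=> H Ha L Hlt.
have Pa := Q5 H Ha.
have La := tg_level H Ha Pa.
have Hl : (1 < level w)%N by rewrite L La ltnS level_gt0.
have Hle := Q2 L Hl (ltnW Hlt).
move: Hle; rewrite leq_eqVlt => /orP[/eqP E|//].
have [_ Lpw _] := par_spec Hl.
have Lpp : level (par w) = level (par a) by apply/eqP; rewrite -eqSS Lpw L La.
have Hs := rk_sameP Lpp E.
have Pw : par w \in B.
  have := sameP_mem H (_ : par a \in A :|: B) (_ : sameP (par a) (par w)).
  rewrite !inE Pa orbT => /(_ isT); rewrite sameP_sym => /(_ Hs) /orP[HA|//].
  by move: (tg_level H HA Pa); rewrite Lpp => E'; case: (n_Sn _ E').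
case/andP: (rk_ltE L Hlt) => _ Hn.
by move: (Q6 H Ha L Hn Pw); rewrite ltnNge ltnW.
Qed.

Lemma intopP x : reflect (exists A, exists B, tg A B /\ x \in A) (intop x).
Proof.
apply: (iffP existsP) => [[A /existsP[B /andP[H Hx]]]|[A [B [H Hx]]]].
  by exists A, B.
by exists A; apply/existsP; exists B; rewrite H Hx.
Qed.

Lemma FK a b : (level a).+1 = level b -> ~~ sameP a b ->
  (a < b -> lexlt (ekey a) (ekey b)) /\ (~~ (a < b) -> lexlt (ekey b) (ekey a)).
Proof.
move=> L Hn.
have Hlb : (1 < level b)%N by rewrite -L ltnS level_gt0.
have [Hpb Lpb _] := par_spec Hlb.
have Lpa : level (par b) = level a by apply/eqP; rewrite -eqSS Lpb L.
have HQ4 := Q4 L Hn.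
rewrite /ekey; case: (intopP a) => [[A' [B' [H' Ha]]]|Na]; case: (intopP b) => [[A [B [H Hb]]]|Nb].
-
  have Pb := Q5 H Hb; have Pa := Q5 H' Ha.
  have La := tg_level H' Ha Pa.
  have Hla : (1 < level a)%N by rewrite La ltnS level_gt0.
  have Hlpb : (1 < level (par b))%N by rewrite Lpa.
  have [_ Lppb _] := par_spec Hlpb.
  have Lx : level (par a) = level (par (par b)) by apply/eqP; rewrite -eqSS Lppb Lpa La.
  rewrite (vecS2 Hlpb).
  have [G1 G2] := vecG (s := [:: rk (par b)]) Lx isT.
  split => Hab.
    apply: G1; apply: (Q2 (esym Lpa) Hla); by rewrite -HQ4.
  apply: G2; apply: (top_down H' Ha Lpa); by rewrite ltnNge -HQ4.
-
  have Pa := Q5 H' Ha.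
  have La := tg_level H' Ha Pa.
  have Hla : (1 < level a)%N by rewrite La ltnS level_gt0.
  have Hlpb : (1 < level (par b))%N by rewrite Lpa.
  have [_ Lppb _] := par_spec Hlpb.
  have Lx : level (par a) = level (par (par b)) by apply/eqP; rewrite -eqSS Lppb Lpa La.
  rewrite (vecS2 Hlb) (vecS2 Hlpb) -catA.
  have [G1 G2] := vecG (s := [:: rk (par b)] ++ [:: rk b]) Lx isT.
  split => Hab.
    apply: G1; apply: (Q2 (esym Lpa) Hla); by rewrite -HQ4.
  apply: G2; apply: (top_down H' Ha Lpa); by rewrite ltnNge -HQ4.
-
  have Pb := Q5 H Hb.
  have Hns : ~~ sameP a (par b).
    apply/negP => Hs; move/negP: Hn; apply.
    have Ha : a \in A :|: B.
      apply: (sameP_mem H (_ : par b \in A :|: B)); first by rewrite inE Pb orbT.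
      by rewrite sameP_sym.
    by apply: (tg_sameP H Ha); rewrite inE Hb.
  have Hne : rk a != rk (par b).
    by apply: contra Hns => /eqP E; apply: rk_sameP; rewrite ?Lpa.
  split => Hab.
    apply: vec_lt; first by rewrite Lpa.
    by rewrite ltn_neqAle Hne -HQ4.
  by apply: vec_lt; rewrite // ltnNge -HQ4.
-
  rewrite (vecS2 Hlb).
  have [G1 G2] := vecG (s := [:: rk b]) (esym Lpa) isT.
  split => Hab.
    by apply: G1; rewrite -HQ4.
  by apply: G2; rewrite ltnNge -HQ4.
Qed.

Definition ispart (S : {set T}) := is_clone S || is_tangle S.

Lemma is_tangleP S : reflect (exists A, exists B, tg A B /\ S = A :|: B) (is_tangle S).
Proof.
apply: (iffP existsP) => [[A /existsP[B /and4P[H1 H2 H3 /eqP E]]]|[A [B [H E]]]].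
  by exists A, B; split => //; rewrite /tg H1 H2 H3.
exists A; apply/existsP; exists B; case/and3P: H => H1 H2 H3; by rewrite H1 H2 H3 E eqxx.
Qed.

Lemma part_class S x : ispart S -> x \in S -> forall y, (y \in S) = sameP x y.
Proof.
case/orP => [/existsP[x0 /andP[Hx0 /eqP E]]|/is_tangleP[A [B [H E]]]] Hx y; subst S.
  move: Hx; rewrite inE !in_tangleE => /andP[Hx Hxx].
  rewrite inE in_tangleE /sameP.
  have -> : [exists A, exists B, [&& tg A B, x \in A :|: B & y \in A :|: B]] = false.
    apply/negbTE/negP => /existsP[A /existsP[B /and3P[H Hx' _]]].
    by move/negP: Hx; apply; apply/existsP; exists A; apply/existsP; exists B; rewrite H Hx'.
  rewrite Hx /=; congr (_ && _); apply/idP/idP => Ha.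
    by apply: approx_trans Ha; rewrite approx_sym.
  exact: approx_trans Hxx Ha.
apply/idP/idP => Hy; first exact: tg_sameP H Hx Hy.
exact: sameP_mem H Hx Hy.
Qed.

Lemma ekey_tg A B u b : tg A B -> u \in A :|: B -> b \in B -> ekey u = vec b.
Proof.
move=> H; rewrite inE => /orP[Hu|Hu] Hb.
  have Hi : intop u by apply/intopP; exists A, B.
  rewrite /ekey Hi.
  have Pu := Q5 H Hu.
  apply: vec_eq; first exact: tg_levelB H Pu Hb.
  apply: rk_eq; first exact: tg_levelB H Pu Hb.
  by apply: (tg_sameP H); rewrite inE ?Pu ?Hb orbT.
have Hi : ~~ intop u.
  by apply/intopP => [[A' [B' [H' Hu']]]]; exact: tg_topbot H' H Hu' Hu.
rewrite /ekey (negbTE Hi).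
apply: vec_eq; first exact: tg_levelB H Hu Hb.
apply: rk_eq; first exact: tg_levelB H Hu Hb.
by apply: (tg_sameP H); rewrite inE ?Hu ?Hb orbT.
Qed.

Lemma ekey_sameP x y : sameP x y -> ekey x = ekey y.
Proof.
case/orP => [/existsP[A /existsP[B /and3P[H Hx Hy]]]|/and3P[Hx Hy Ha]].
  case/tgP: (H) => _ _ _ HcB _.
  have [b Hb] : exists b, b \in B.
    by case/card_gt1P: HcB => b [b' [Hb _ _]]; exists b.
  by rewrite (ekey_tg H Hx Hb) (ekey_tg H Hy Hb).
have Ni : forall u, ~~ tgx u -> ~~ intop u.
  move=> u; apply: contra => /intopP[A [B [H Hu]]].
  by apply/existsP; exists A; apply/existsP; exists B; rewrite H inE Hu.
rewrite /ekey (negbTE (Ni _ Hx)) (negbTE (Ni _ Hy)).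
have L : level x = level y by apply: level_D; case/andP: Ha => /eqP.
apply: vec_eq => //; apply: rk_eq => //; exact: approx_sameP.
Qed.

Definition pkey (S : {set T}) := if [pick x in S] is Some x then ekey x else [::].

Lemma pkey_ekey S x : ispart S -> x \in S -> pkey S = ekey x.
Proof.
move=> HS Hx; rewrite /pkey; case: pickP => [y Hy|H]; last by move: (H x); rewrite Hx.
apply: ekey_sameP; by rewrite -(part_class HS Hy).
Qed.

End Free.

Definition lexle (s t : seq nat) := (s == t) || lexlt s t.

Lemma lexle_total : total lexle.
Proof.
move=> s t; rewrite /lexle; case: (eqVneq s t) => [->|H] /=; first by [].
by rewrite (lexlt_total H).
Qed.

Lemma lexle_trans : transitive lexle.
Proof.
move=> t s u; rewrite /lexle; case/orP => [/eqP->//|H1]; case/orP => [/eqP<-|H2].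
  by rewrite H1 orbT.
by rewrite (lexlt_trans H1 H2) orbT.
Qed.

Lemma sorted_key (U : eqType) (f : U -> seq nat) (s : seq U) (x0 : U) i j :
  sorted (fun a b => lexle (f a) (f b)) s -> (i < size s)%N -> (j < size s)%N ->
  lexlt (f (nth x0 s i)) (f (nth x0 s j)) -> (i < j)%N.
Proof.
move=> Hs Hi Hj Hl.
case: (ltngtP i j) => // [Hji|E]; last by move: Hl; rewrite E lexlt_irr.
have Htr : transitive (fun a b => lexle (f a) (f b)).
  by move=> b a c H1 H2; exact: lexle_trans H1 H2.
have := sorted_ltn_nth Htr x0 Hs j i Hj Hi Hji.
by rewrite /lexle => /orP[/eqP E|H]; [move: Hl; rewrite E lexlt_irr | move: Hl; rewrite (lexlt_asym H)].
Qed.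

Theorem theorem3p3 (disp : Order.disp_t) (T : finPOrderType disp) :
  free31 (T := T) ->
  exists X : seq {set T},
    [/\ uniq X,
        (forall S : {set T}, (S \in X) = is_clone S || is_tangle S) &
        forall (i j : nat) (a b : T),
          (i < size X)%N -> (j < size X)%N -> i != j ->
          a \in nth set0 X i -> b \in nth set0 X j ->
          (a < b) = ((level a + 2 <= level b)%N
                     || ((level a + 1 == level b)%N && (i < j)%N))].
Proof.
move=> H31.
set X := sort (fun S1 S2 => lexle (pkey S1) (pkey S2))
  (enum (fun S : {set T} => is_clone S || is_tangle S)).
have XU : uniq X by rewrite sort_uniq enum_uniq.
have XM : forall S : {set T}, (S \in X) = is_clone S || is_tangle S.
  by move=> S; rewrite mem_sort mem_enum.
exists X; split => // i j a b Hi Hj Hij Ha Hb.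
have Hsort : sorted (fun S1 S2 => lexle (pkey S1) (pkey S2)) X.
  by apply: sort_sorted => S1 S2; exact: lexle_total.
have PX : forall k, (k < size X)%N -> ispart (nth set0 X k).
  by move=> k Hk; rewrite /ispart -XM; exact: mem_nth.
have Pi := PX i Hi; have Pj := PX j Hj.
have Hn : ~~ sameP a b.
  apply/negP => Hs; move/negP: Hij; apply.
  have E : nth set0 X i = nth set0 X j.
    apply/setP => y; rewrite (part_class H31 Pi Ha) (part_class H31 Pj Hb).

    have Hs' : sameP b a by rewrite sameP_sym.
    apply/idP/idP => H.
      exact: (sameP_trans H31 Hs' H).
    exact: (sameP_trans H31 Hs H).
  by rewrite -(nth_uniq set0 Hi Hj XU) E.
have Ka : pkey (nth set0 X i) = ekey a := pkey_ekey H31 Pi Ha.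
have Kb : pkey (nth set0 X j) = ekey b := pkey_ekey H31 Pj Hb.
case: (boolP (level a + 2 <= level b)%N) => H2.
  by rewrite (far H31 H2).
rewrite /=.
case: (boolP (level a + 1 == level b)%N) => H1 /=.
  have L : (level a).+1 = level b by rewrite -addn1; apply/eqP.
  have [F1 F2] := FK H31 L Hn.
  case: (boolP (a < b)) => Hab.
    have := sorted_key (f := @pkey disp T) (x0 := set0) Hsort Hi Hj.
    by rewrite Ka Kb => /(_ (F1 Hab)) ->.
  have := sorted_key (f := @pkey disp T) (x0 := set0) Hsort Hj Hi (_ : lexlt _ _).
  rewrite Ka Kb => /(_ (F2 Hab)) Hji.
  by apply/esym/negbTE; rewrite -leqNgt ltnW.
have Hle : (level b <= level a)%N.
  move: H2; rewrite -ltnNge addn2 ltnS leq_eqVlt => /orP[/eqP E|//].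
  by move: H1; rewrite E addn1 eqxx.
by apply/negbTE; exact: nlt_level Hle.
Qed.
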